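(* Let $b\ge3$, $1\le j\le b-1$, $\ell\in\{2,\dots,b\}$. For $i=1,\dots,\ell$ let $I_i=[a_i,b_i]\subseteq[0,1]$ and $J_i=[c_i,d_i]\subseteq[0,1]$ be nonempty intervals, and fix numbers $\bar p_{\ell+1},\dots,\bar p_b,\bar q_{\ell+1},\dots,\bar q_b$. Let $D$ be the set of pairs $(p,q)$ of probability vectors in $\mathbb R^b$ with $p_i\in I_i$, $q_i\in J_i$ for $i\le\ell$ and $p_i=\bar p_i$, $q_i=\bar q_i$ for $i>\ell$. If $(\bar p;\bar q)\in D$ is a maximum point of $\Psi_j$ on $D$, then either $\bar p_i=\bar p_h$ and $\bar q_i=\bar q_h$ for all $i,h\in\{1,\dots,\ell\}$, or the maximum of $\Psi_j$ on $D$ is also attained at some point $(p';q')\in D$ for which there is an index $i\in\{1,\dots,\ell\}$ with $p'_i\in\{a_i,b_i\}$ or $q'_i\in\{c_i,d_i\}$.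
   Context: For an integer $1\le j\le b-1$ and vectors $p,q\in\mathbb R^b$, $$\Psi_j(p;q)=\frac{1}{(b-j-1)!}\sum_{\sigma\in S_b}\Big(p_{\sigma(1)}\cdots p_{\sigma(j)}\,q_{\sigma(j+1)}+q_{\sigma(1)}\cdots q_{\sigma(j)}\,p_{\sigma(j+1)}\Big),$$ where $S_b$ is the set of permutations of $\{1,\dots,b\}$. *)

(* Defs.v *)
From HB Require Import structures.
From mathcomp Require Import all_boot all_order all_fingroup all_algebra.
From mathcomp Require Import reals.
Set Implicit Arguments. Unset Strict Implicit. Unset Printing Implicit Defensive.
Import Order.TTheory GRing.Theory Num.Theory.
Local Open Scope ring_scope.

(* Indices 1..b of the paper are represented 0-based by 'I_b:
   paper index k corresponds to ordinal k-1. *)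

(* j is given as an ordinal of 'I_b (so j <= b-1 automatically); 0-based index j is paper index j+1.
   Psi_j(p;q) = 1/(b-j-1)! * sum_{sigma in S_b}
     (p_{sigma(1)}..p_{sigma(j)} q_{sigma(j+1)} + q_{sigma(1)}..q_{sigma(j)} p_{sigma(j+1)}) *)
Definition Psi (R : realType) (b : nat) (j : 'I_b) (p q : 'I_b -> R) : R :=
  ((b - j - 1)`!%:R)^-1 *
  \sum_(s : 'S_b)
     ((\prod_(k < b | (k < j)%N) p (s k)) * q (s j)
      + (\prod_(k < b | (k < j)%N) q (s k)) * p (s j)).

Definition prob_vec (R : realType) (b : nat) (p : 'I_b -> R) : Prop :=
  (forall i, 0 <= p i) /\ \sum_(i < b) p i = 1.

Definition inD (R : realType) (b l : nat)
    (a bb c d pbar qbar : 'I_b -> R) (p q : 'I_b -> R) : Prop :=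
  prob_vec p /\ prob_vec q /\
  (forall i : 'I_b, (i < l)%N -> a i <= p i <= bb i /\ c i <= q i <= d i) /\
  (forall i : 'I_b, (l <= i)%N -> p i = pbar i /\ q i = qbar i).

(* Main.v *)
Require Import Defs.
From HB Require Import structures.
From mathcomp Require Import all_boot all_order all_fingroup all_algebra.
From mathcomp Require Import reals.
From mathcomp Require Import ring lra.
Import Order.TTheory GRing.Theory Num.Theory.
Set Implicit Arguments. Unset Strict Implicit.
Local Open Scope ring_scope.

Definition aff (R : realType) (f : R -> R) := forall t, f t = f 0 + t * (f 1 - f 0).

Lemma aff_sum (R : realType) (I : finType) (F : R -> I -> R) :
  (forall s, aff (fun t => F t s)) -> aff (fun t => \sum_s F t s).
Proof.
move=> H t; rewrite (eq_bigr _ (fun s _ => H s t)) big_split /= -mulr_sumr -sumrB.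
by [].
Qed.

Lemma aff_prod (R : realType) (I : finType) (P : pred I) (F : R -> I -> R) (k0 : I) :
  (forall t k, k != k0 -> F t k = F 0 k) -> aff (fun t => F t k0) ->
  aff (fun t => \prod_(k | P k) F t k).
Proof.
move=> HF Ha.
case Pk: (P k0).
  have E : forall u, \prod_(k | P k) F u k = F u k0 * \prod_(k | P k && (k != k0)) F 0 k.
    move=> u; rewrite (bigD1 k0) //=; congr (_ * _).
    by apply: eq_bigr => k /andP[_ /HF ->].
  move=> t; rewrite /= !E (Ha t); ring.
have E : forall u, \prod_(k | P k) F u k = \prod_(k | P k) F 0 k.
  move=> u; apply: eq_bigr => k Pk'; apply: HF; apply/eqP => e; move: Pk; by rewrite -e Pk'.
move=> t; rewrite /= !E; ring.
Qed.
Lemma termE (R : realType) b (j : 'I_b) (p q : 'I_b -> R) (s : 'S_b) :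
  (\prod_(k < b | (k < j)%N) p (s k)) * q (s j) =
  \prod_(k < b | (k <= j)%N) (if (k < j)%N then p (s k) else q (s k)).
Proof.
rewrite [RHS](bigD1 j) //= ltnn mulrC; congr (_ * _).
apply: eq_big => k.
  by rewrite ltn_neqAle andbC.
by move=> ->.
Qed.

Lemma Psi_aff (R : realType) b (j : 'I_b) (x : 'I_b) (P Q : R -> 'I_b -> R) :
  (forall t y, y != x -> P t y = P 0 y /\ Q t y = Q 0 y) ->
  aff (fun t => P t x) -> aff (fun t => Q t x) ->
  aff (fun t => Psi j (P t) (Q t)).
Proof.
move=> HPQ HP HQ t.
rewrite /Psi.
set K := _^-1.
have : aff (fun t => \sum_(s : 'S_b)
     ((\prod_(k < b | (k < j)%N) P t (s k)) * Q t (s j)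
      + (\prod_(k < b | (k < j)%N) Q t (s k)) * P t (s j))).
  apply: aff_sum => s; move=> u /=.
  rewrite !termE.
  have A : forall (U V : R -> 'I_b -> R), (forall t y, y != x -> U t y = U 0 y /\ V t y = V 0 y) ->
      aff (fun t => U t x) -> aff (fun t => V t x) ->
      aff (fun t => \prod_(k < b | (k <= j)%N) (if (k < j)%N then U t (s k) else V t (s k))).
    move=> U V HUV HU HV.
    apply: (aff_prod _ (k0 := s^-1 x)%g).
      move=> w k kn; have sk : s k != x.
        by apply: contra kn => /eqP <-; rewrite permK.
      by have [E1 E2] := HUV w _ sk; case: ifP.
    rewrite /aff !permKV; case: ifP => _; [exact: HU | exact: HV].
  have H1 := A P Q HPQ HP HQ.
  have H2 : forall t y, y != x -> Q t y = Q 0 y /\ P t y = P 0 y.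
    by move=> w y /(HPQ w) [-> ->].
  have H3 := A Q P H2 HQ HP.
  rewrite (H1 u) (H3 u); ring.
move=> /(_ t) ->; ring.
Qed.
Lemma Psi_ext (R : realType) b (j : 'I_b) (p q p' q' : 'I_b -> R) :
  p =1 p' -> q =1 q' -> Psi j p q = Psi j p' q'.
Proof.
move=> Hp Hq; rewrite /Psi; congr (_ * _); apply: eq_bigr => s _.
by congr (_ + _); congr (_ * _); try (apply: eq_bigr => k _); rewrite ?Hp ?Hq.
Qed.

Lemma Psi_perm (R : realType) b (j : 'I_b) (p q : 'I_b -> R) (pi : 'S_b) :
  Psi j (fun y => p (pi y)) (fun y => q (pi y)) = Psi j p q.
Proof.
rewrite /Psi; congr (_ * _).
rewrite [RHS](reindex_inj (mulIg pi)) /=.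
apply: eq_bigr => s _; rewrite !permM.
by congr (_ + _); congr (_ * _); apply: eq_bigr => k _; rewrite permM.
Qed.
Definition cf (R : realType) (c : R * R * R * R) (t : R) : bool :=
  let: (lo, hi, x, r) := c in (lo <= x + t * r) && (x + t * r <= hi).
Definition tight (R : realType) (c : R * R * R * R) (t : R) : bool :=
  let: (lo, hi, x, r) := c in (r != 0) && ((x + t * r == lo) || (x + t * r == hi)).

Lemma cf_conv (R : realType) (c : R * R * R * R) t1 t :
  cf c 0 -> cf c t1 -> 0 <= t <= t1 -> cf c t.
Proof.
case: c => [[[lo hi] x] r] /=; rewrite !mul0r addr0.
move=> /andP[h1 h2] /andP[h3 h4] /andP[t0 tt1].
have [r0|r0] := leP 0 r.
  have A : t * r <= t1 * r by rewrite ler_wpM2r.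
  have B : 0 <= t * r by rewrite mulr_ge0.
  apply/andP; split; lra.
have A : t1 * r <= t * r by rewrite ler_wnM2r // ltW.
have B : t * r <= 0 by rewrite mulr_ge0_le0 // ltW.
apply/andP; split; lra.
Qed.

Lemma cf_u (R : realType) (c : R * R * R * R) :
  cf c 0 -> c.2 != 0 -> exists u, [/\ 0 <= u, cf c u, tight c u &
     forall t, 0 <= t -> ~~ cf c t -> u <= t].
Proof.
case: c => [[[lo hi] x] r] /=; rewrite !mul0r addr0 => /andP[h1 h2] rn0.
have [r0|r0] := ltP 0 r.
  exists ((hi - x) / r).
  have key : (hi - x) / r * r = hi - x by rewrite divfK.
  have u0 : 0 <= (hi - x) / r by rewrite divr_ge0 // ?subr_ge0 // ltW.
  split => //.
  - rewrite key; apply/andP; split; lra.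
  - by rewrite rn0 key /=; apply/orP; right; apply/eqP; ring.
  move=> t t0; rewrite negb_and -!ltNge => /orP[]; last first.
    by move=> H; rewrite -(ler_pM2r r0) key; lra.
  have : 0 <= t * r by rewrite mulr_ge0 // ltW.
  lra.
have rn : r < 0 by rewrite lt_neqAle rn0 r0.
exists ((lo - x) / r).
have key : (lo - x) / r * r = lo - x by rewrite divfK.
have u0 : 0 <= (lo - x) / r by rewrite -(ler_nM2r rn) mul0r key; lra.
split => //.
- rewrite key; apply/andP; split; lra.
- by rewrite rn0 key /=; apply/orP; left; apply/eqP; ring.
move=> t t0; rewrite negb_and -!ltNge => /orP[]; first last.
  have : t * r <= 0 by rewrite mulr_ge0_le0.
  lra.
by move=> H; rewrite -(ler_nM2r rn) key; lra.
Qed.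
Lemma cf_r0 (R : realType) (c : R * R * R * R) t : c.2 = 0 -> cf c t = cf c 0.
Proof. by case: c => [[[lo hi] x] r] /= ->; rewrite !mulr0. Qed.

Lemma cons_lemma (R : realType) (L : seq (R * R * R * R)) :
  all (fun c => cf c 0) L -> exists t, [/\ 0 <= t, all (fun c => cf c t) L &
    all (fun c => c.2 == 0) L \/ has (fun c => tight c t) L].
Proof.
elim: L => [|c L IH] /=.
  by move=> _; exists 0; split => //; left.
move=> /andP[c0 L0]; have [t0 [t00 Lt0 [Lz|Lt]]] := IH L0.
  have [cz|cn] := eqVneq c.2 0.
    by exists 0; split => //; [rewrite c0 | left].
  have [u [u0 cu tu _]] := cf_u c0 cn.
  exists u; split => //.
    rewrite cu /=; apply/allP => c' c'L; rewrite (cf_r0 _ (eqP (allP Lz c' c'L))).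
    exact: (allP L0).
  by right; rewrite tu.
case ct0: (cf c t0).
  by exists t0; split => //; [rewrite ct0 | right; rewrite Lt orbT].
have [cz|cn] := eqVneq c.2 0.
  by move: ct0; rewrite (cf_r0 _ cz) c0.
have [u [u0 cu tu ut]] := cf_u c0 cn.
have ut0 : u <= t0 by apply: ut; rewrite ?ct0.
exists u; split => //.
  rewrite cu /=; apply/allP => c' c'L; apply: (cf_conv (t1 := t0)).
  - exact: (allP L0).
  - exact: (allP Lt0).
  - by rewrite u0 ut0.
by right; rewrite tu.
Qed.
Definition P2 (R : realType) b (pb : 'I_b -> R) (i h : 'I_b) (t s : R) (y : 'I_b) : R :=
  if y == i then pb i + t * (pb h - pb i)
  else if y == h then pb h + s * (pb i - pb h) else pb y.

Definition L4 (R : realType) b (a bb c d pb qb : 'I_b -> R) (i h : 'I_b) (sg : R) :=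
  [:: (a i, bb i, pb i, sg * (pb h - pb i)); (a h, bb h, pb h, sg * (pb i - pb h));
      (c i, d i, qb i, sg * (qb h - qb i)); (c h, d h, qb h, sg * (qb i - qb h))].

Lemma L4neg (R : realType) b (a bb c d pb qb : 'I_b -> R) (i h : 'I_b) t :
  all (fun x => cf x t) (L4 a bb c d pb qb i h (-1)) = all (fun x => cf x (- t)) (L4 a bb c d pb qb i h 1).
Proof. by rewrite /= !mulN1r !mul1r !mulrN !mulNr. Qed.

Lemma sum2 (R : realType) b (F : 'I_b -> R) (i h : 'I_b) : i != h ->
  \sum_y F y = F i + F h + \sum_(y | (y != i) && (y != h)) F y.
Proof.
move=> ih; rewrite (bigD1 i) //= (bigD1 h) /=; last by rewrite eq_sym.
by rewrite addrA.
Qed.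

Lemma P2_sum (R : realType) b (pb : 'I_b -> R) i h t : i != h ->
  \sum_y P2 pb i h t t y = \sum_y pb y.
Proof.
move=> ih; have hi : (h == i) = false by rewrite eq_sym (negbTE ih).
rewrite !(sum2 _ ih) /P2 !eqxx hi.
have -> : \sum_(y | (y != i) && (y != h))
    (if y == i then pb i + t * (pb h - pb i)
     else if y == h then pb h + t * (pb i - pb h) else pb y) =
   \sum_(y | (y != i) && (y != h)) pb y.
  by apply: eq_bigr => y /andP[/negbTE -> /negbTE ->].
ring.
Qed.

Lemma P20 (R : realType) b (pb : 'I_b -> R) i h y : P2 pb i h 0 0 y = pb y.
Proof.
rewrite /P2; have [->|_] := eqVneq y i; first by rewrite mul0r addr0.
by have [->|_] := eqVneq y h; rewrite ?mul0r ?addr0.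
Qed.

Lemma P21 (R : realType) b (pb : 'I_b -> R) i h y : i != h ->
  P2 pb i h 1 1 y = pb (tperm i h y).
Proof.
move=> ih; rewrite /P2; have [->|yi] := eqVneq y i; first by rewrite tpermL; ring.
have [->|yh] := eqVneq y h; first by rewrite tpermR; ring.
by rewrite tpermD // eq_sym.
Qed.

Lemma inD_line (R : realType) b l (a bb c d pbar qbar : 'I_b -> R) (i h : 'I_b) t :
  (i < l)%N -> (h < l)%N -> i != h ->
  (forall i : 'I_b, (i < l)%N ->
     [/\ 0 <= a i, a i <= bb i, bb i <= 1 &
         [/\ 0 <= c i, c i <= d i & d i <= 1]]) ->
  inD l a bb c d pbar qbar pbar qbar ->
  all (fun x => cf x t) (L4 a bb c d pbar qbar i h 1) ->
  inD l a bb c d pbar qbar (P2 pbar i h t t) (P2 qbar i h t t).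
Proof.
move=> il hl ih Hint [[p0 p1] [[q0 q1] [Hin Hout]]].
rewrite /= !mul1r !andbT => /and4P[/andP[Ai1 Ai2] /andP[Ah1 Ah2] /andP[Ci1 Ci2] /andP[Ch1 Ch2]].
have [a0i _ _ [c0i _ _]] := Hint i il.
have [a0h _ _ [c0h _ _]] := Hint h hl.
split; [|split; [|split]].
- split; last by rewrite P2_sum.
  move=> y; rewrite /P2; have [_|_] := eqVneq y i; first lra.
  have [_|_] := eqVneq y h; [lra | exact: p0].
- split; last by rewrite P2_sum.
  move=> y; rewrite /P2; have [_|_] := eqVneq y i; first lra.
  have [_|_] := eqVneq y h; [lra | exact: q0].
- move=> y yl; rewrite /P2; have [->|_] := eqVneq y i; first by rewrite Ai1 Ai2 Ci1 Ci2.
  by have [->|_] := eqVneq y h; [rewrite Ah1 Ah2 Ch1 Ch2 | apply: Hin].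
- move=> y yl; rewrite /P2; have [e|_] := eqVneq y i.
    by move: yl; rewrite e leqNgt il.
  have [e|_] := eqVneq y h; last exact: Hout.
  by move: yl; rewrite e leqNgt hl.
Qed.

Lemma tight_line (R : realType) b l (a bb c d pbar qbar : 'I_b -> R) (i h : 'I_b) t :
  (i < l)%N -> (h < l)%N -> i != h ->
  has (fun x => tight x t) (L4 a bb c d pbar qbar i h 1) ->
  exists k : 'I_b, (k < l)%N /\
    (P2 pbar i h t t k = a k \/ P2 pbar i h t t k = bb k \/
     P2 qbar i h t t k = c k \/ P2 qbar i h t t k = d k).
Proof.
move=> il hl ih; rewrite /= !mul1r !orbF.
have hi : (h == i) = false by rewrite eq_sym (negbTE ih).
rewrite /P2.
case/or4P => /andP[_ /orP[]] /eqP E.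
- by exists i; rewrite eqxx; split => //; left.
- by exists i; rewrite eqxx; split => //; right; left.
- by exists h; rewrite hi eqxx; split => //; left.
- by exists h; rewrite hi eqxx; split => //; right; left.
- by exists i; rewrite eqxx; split => //; right; right; left.
- by exists i; rewrite eqxx; split => //; right; right; right.
- by exists h; rewrite hi eqxx; split => //; right; right; left.
- by exists h; rewrite hi eqxx; split => //; right; right; right.
Qed.
Lemma L4neg_tight (R : realType) b (a bb c d pb qb : 'I_b -> R) (i h : 'I_b) t :
  has (fun x => tight x t) (L4 a bb c d pb qb i h (-1)) =
  has (fun x => tight x (- t)) (L4 a bb c d pb qb i h 1).
Proof. by rewrite /= !mulN1r !mul1r !mulrN !mulNr !oppr_eq0. Qed.

Lemma G_quad (R : realType) b (j : 'I_b) (pb qb : 'I_b -> R) (i h : 'I_b) : i != h ->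
  let G := fun t s => Psi j (P2 pb i h t s) (P2 qb i h t s) in
  forall t, G t t = G 0 0 + t * (G 0 1 - G 0 0) +
     t * ((G 1 0 + t * (G 1 1 - G 1 0)) - (G 0 0 + t * (G 0 1 - G 0 0))).
Proof.
move=> ih G.
have hi : (h == i) = false by rewrite eq_sym (negbTE ih).
have affT : forall s, aff (fun t => G t s).
  move=> s; apply: (@Psi_aff _ _ j i).
  - by move=> t y yi; rewrite /P2 (negbTE yi).
  - by move=> t; rewrite /P2 eqxx; ring.
  - by move=> t; rewrite /P2 eqxx; ring.
have affS : forall t, aff (fun s => G t s).
  move=> t; apply: (@Psi_aff _ _ j h).
  - by move=> s y yh; rewrite /P2 (negbTE yh).
  - by move=> s; rewrite /P2 hi eqxx; ring.
  - by move=> s; rewrite /P2 hi eqxx; ring.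
move=> t; rewrite (affT t t) (affS 0 t) (affS 1 t); ring.
Qed.

Theorem mainTheorem5 (R : realType) (b : nat) (j : 'I_b) (l : nat)
    (a bb c d pbar qbar : 'I_b -> R) :
  (3 <= b)%N -> (1 <= j)%N -> (2 <= l <= b)%N ->
  (forall i : 'I_b, (i < l)%N ->
     [/\ 0 <= a i, a i <= bb i, bb i <= 1 &
         [/\ 0 <= c i, c i <= d i & d i <= 1]]) ->
  inD l a bb c d pbar qbar pbar qbar ->
  (forall p q, inD l a bb c d pbar qbar p q -> Psi j p q <= Psi j pbar qbar) ->
  (forall i h : 'I_b, (i < l)%N -> (h < l)%N -> pbar i = pbar h /\ qbar i = qbar h)
  \/
  (exists p' q', [/\ inD l a bb c d pbar qbar p' q',
                    Psi j p' q' = Psi j pbar qbar &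
                    exists i : 'I_b, (i < l)%N /\
                      (p' i = a i \/ p' i = bb i \/ q' i = c i \/ q' i = d i)]).
Proof.
move=> _ _ _ Hint HD Hmax.
case: (boolP [forall i : 'I_b, forall h : 'I_b, ((i < l)%N && (h < l)%N) ==>
           ((pbar i == pbar h) && (qbar i == qbar h))]) => [Hall|Hnall].
  left => i h il hl; move/forallP: Hall => /(_ i) /forallP /(_ h).
  by rewrite il hl /= => /andP[/eqP -> /eqP ->].
right.
case: (boolP [exists i : 'I_b, (i < l)%N &&
     [|| pbar i == a i, pbar i == bb i, qbar i == c i | qbar i == d i]]) => [Hex|Hnex].
  move/existsP: Hex => [i /andP[il H]].
  exists pbar, qbar; split => //; exists i; split => //.
  by case/or4P: H => /eqP ->; tauto.
have [i [h [il hl neq]]] : exists i h : 'I_b, [/\ (i < l)%N, (h < l)%N &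
    ~~ ((pbar i == pbar h) && (qbar i == qbar h))].
  move: Hnall; rewrite negb_forall => /existsP[i]; rewrite negb_forall => /existsP[h].
  by rewrite negb_imply => /andP[/andP[il hl] H]; exists i, h.
have ih : i != h by apply: contra neq => /eqP ->; rewrite !eqxx.
have nobd : forall t, has (fun x => tight x t) (L4 a bb c d pbar qbar i h 1) -> t != 0.
  move=> t /(tight_line il hl ih) [k [kl H]]; apply/eqP => t0; subst t.
  move/negP: Hnex; apply; apply/existsP; exists k; rewrite kl /=.
  by rewrite !P20 in H; case: H => [->|[->|[->|->]]]; rewrite eqxx ?orbT.
have [[p0 p1] [[q0 q1] [Hin Hout]]] := HD.
have [ai _ _ [ci _ _]] := Hint i il.
have [ah _ _ [ch _ _]] := Hint h hl.
have [/andP[Ai1 Ai2] /andP[Ci1 Ci2]] := Hin i il.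
have [/andP[Ah1 Ah2] /andP[Ch1 Ch2]] := Hin h hl.
have all0 : forall sg, all (fun x => cf x 0) (L4 a bb c d pbar qbar i h sg).
  by move=> sg; rewrite /= !mul0r !addr0 Ai1 Ai2 Ah1 Ah2 Ci1 Ci2 Ch1 Ch2.
have notz : forall sg, sg != 0 -> ~~ all (fun x => x.2 == 0) (L4 a bb c d pbar qbar i h sg).
  move=> sg sg0; apply: contra neq => /=; rewrite !mulf_eq0 (negbTE sg0) /=.
  by rewrite !subr_eq0 => /and4P[/eqP -> _ /eqP -> _]; rewrite !eqxx.
have [tp [tp0 Ltp [Lz|tpt]]] := cons_lemma (all0 1).
  by move: Lz; rewrite (negbTE (notz 1 (oner_neq0 _))).
have tpp : 0 < tp by rewrite lt_neqAle eq_sym (nobd _ tpt) tp0.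
have [tm [tm0 Ltm [Lz|tmt]]] := cons_lemma (all0 (-1)).
  by move: Lz; rewrite (negbTE (notz (-1) _)) // oppr_eq0 oner_neq0.
rewrite L4neg in Ltm.
have tmp : 0 < tm.
  rewrite L4neg_tight in tmt.
  by rewrite lt_neqAle eq_sym tm0 andbT -oppr_eq0 (nobd _ tmt).
pose G := fun t s => Psi j (P2 pbar i h t s) (P2 qbar i h t s).
have Gq := G_quad j pbar qbar ih.
have G00 : G 0 0 = Psi j pbar qbar by apply: Psi_ext => y; rewrite P20.
have G11 : G 1 1 = G 0 0.
  rewrite G00 /G (@Psi_ext _ _ j _ _ (fun y => pbar (tperm i h y)) (fun y => qbar (tperm i h y))).
    exact: Psi_perm.
  - by move=> y; rewrite P21.
  - by move=> y; rewrite P21.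
have feas : forall t, all (fun x => cf x t) (L4 a bb c d pbar qbar i h 1) -> G t t <= G 0 0.
  by move=> t Ht; rewrite G00; apply: Hmax; apply: inD_line.
pose S := (G 0 1 - G 0 0) + (G 1 0 - G 0 0).
have ft : forall t, G t t = G 0 0 + S * (t * (1 - t)).
  move=> t; have E := Gq t; move: G11; rewrite /S /G /= in E * => G11'.
  by rewrite E G11'; ring.
have [t1 [t10 t11 t1p]] : exists t1 : R, [/\ 0 < t1, t1 < 1 & t1 <= tp].
  have [tp1|tp1] := ltP tp 1; first by exists tp.
  exists (2^-1); split; [by rewrite invr_gt0 ltr0n | by rewrite invf_lt1 ?ltr0n ?ltr1n | ].
  apply: le_trans tp1; by rewrite invf_le1 ?ltr0n ?ler1n.
have Ht1 : all (fun x => cf x t1) (L4 a bb c d pbar qbar i h 1).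
  apply/allP => x xL; apply: (cf_conv (t1 := tp)).
  - exact: (allP (all0 1)).
  - exact: (allP Ltp).
  - by rewrite t1p ltW.
have S1 : S <= 0.
  have pos : 0 < t1 * (1 - t1) by rewrite mulr_gt0 // subr_gt0.
  have := feas _ Ht1; rewrite ft => H; rewrite -(pmulr_lle0 _ pos); lra.
have S2 : 0 <= S.
  have neg : - tm * (1 - - tm) < 0.
    by rewrite mulNr oppr_lt0 mulr_gt0 // opprK ltr_wpDr.
  have := feas _ Ltm; rewrite ft => H; rewrite -(nmulr_lle0 _ neg); lra.
have S0 : S = 0 by apply/eqP; rewrite eq_le S1 S2.
exists (P2 pbar i h tp tp), (P2 qbar i h tp tp); split.
- exact: inD_line.
- by rewrite -/(G tp tp) ft S0 mul0r addr0.
- exact: tight_line tpt.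
Qed.
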